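(* Let $\tau>0$, $\mathcal C=C([-\tau,0];\mathbb R^n)$, and let $f:\mathcal C\to\mathbb R^n$, $g:\mathcal C\to\mathbb R^{n\times d}$ satisfy (A2): there are constants $p\ge2$, $\varrho>0$, $a_1,a_2,a_3>0$ with $a_2>a_3$ and $\rho_1\in\mathcal W$ such that for all $\phi\in\mathcal C$ $$2\phi(0)^Tf(\phi)+(p-1)|g(\phi)|^2\le a_1\Big(1+|\phi(0)|^2+\frac1\tau\int_{-\tau}^0|\phi(\theta)|^2\mathrm d\theta\Big)-a_2|\phi(0)|^{2+\varrho}+a_3\int_{-\tau}^0|\phi(\theta)|^{2+\varrho}\rho_1(\theta)\mathrm d\theta.$$ Let $\varepsilon_0\in(0,1)$ satisfy $\frac{a_2+a_3}{2}<a_2(1-\varepsilon_0)^{p/2}$, let $\kappa\in(0,1)$ satisfy $\frac{(a_2+a_3)(1+\kappa)}{2}<a_2(1-\varepsilon_0)^{p/2}$, let $\Phi(\phi)=1+(1-\varepsilon_0)|\phi(0)|^2+\frac{\varepsilon_0}{\tau}\int_{-\tau}^0|\phi(\theta)|^2\mathrm d\theta$, and set $$\alpha_1=\frac p2\Big(a_2(1-\varepsilon_0)^{p/2}-(1+\kappa)(1-\varepsilon_0)\Big(\frac{a_3(p-2)}{p+\varrho}+\frac{a_2-a_3}{2}\Big)\Big),\quad \alpha_2=\frac{p(1+\kappa)\varepsilon_0}{2}\Big(\frac{a_3(p-2)}{p+\varrho}+\frac{a_2-a_3}{2}\Big),\quad\alpha_3=\frac{a_3p(2+\varrho)}{2(p+\varrho)}.$$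 Then $0<\alpha_2+\alpha_3<\alpha_1$, and for every $c>0$ there is a constant $L>0$ such that for all $\phi\in\mathcal C$ $$c\,\Phi(\phi)^{p/2}+\frac{(1-\varepsilon_0)p}{2}\Phi(\phi)^{\frac{p-2}{2}}\big(2\phi(0)^Tf(\phi)+(p-1)|g(\phi)|^2\big)\le L-\alpha_1|\phi(0)|^{p+\varrho}+\frac{\alpha_2}{\tau}\int_{-\tau}^0|\phi(\theta)|^{p+\varrho}\mathrm d\theta+\alpha_3\int_{-\tau}^0|\phi(\theta)|^{p+\varrho}\rho_1(\theta)\mathrm d\theta.$$
   Context: $|\cdot|$ is the Euclidean norm on $\mathbb R^n$ and the trace (Frobenius) norm on $\mathbb R^{n\times d}$. $\mathcal W$ is the set of bounded Borel measurable functions $\rho:[-\tau,0]\to[0,\infty)$ with $\int_{-\tau}^0\rho(\theta)\mathrm d\theta=1$. *)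

(* Defs.v *)
From HB Require Import structures.
From mathcomp Require Import all_boot all_order all_algebra.
From mathcomp Require Import all_classical all_reals all_analysis.
Set Implicit Arguments. Unset Strict Implicit. Unset Printing Implicit Defensive.
Import Order.TTheory GRing.Theory Num.Theory.
Local Open Scope classical_set_scope.
Local Open Scope ring_scope.
Import numFieldNormedType.Exports.

Section Defs.
Variable R : realType.

Definition enorm (n : nat) (v : 'rV[R]_n) : R :=
  Num.sqrt (\sum_(i < n) v 0 i ^+ 2).

Definition fnorm (n d : nat) (A : 'M[R]_(n, d)) : R :=
  Num.sqrt (\sum_(i < n) \sum_(j < d) A i j ^+ 2).

Definition edot (n : nat) (u v : 'rV[R]_n) : R := \sum_(i < n) u 0 i * v 0 i.

Definition intT (tau : R) (h : R -> R) : R :=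
  Rintegral (@lebesgue_measure R) `[- tau, 0]%classic h.

(* Elements of C([-tau,0]; R^n), represented as functions on R that are
   continuous on [-tau,0] (only their values on [-tau,0] are used). *)
Definition is_C (n : nat) (tau : R) (phi : R -> 'rV[R]_n) : Prop :=
  {within (`[- tau, 0]%classic : set R), continuous phi}.

Definition in_W (tau : R) (rho : R -> R) : Prop :=
  [/\ measurable_fun `[- tau, 0]%classic rho,
      (exists M : R, forall t, - tau <= t <= 0 -> rho t <= M),
      (forall t, - tau <= t <= 0 -> 0 <= rho t) &
      intT tau rho = 1].

End Defs.

(* Main.v *)
Require Import Defs.
From HB Require Import structures.
From mathcomp Require Import all_boot all_order all_algebra.
From mathcomp Require Import all_classical all_reals all_analysis.
From mathcomp Require Import measurable_realfun.
From mathcomp Require Import ring lra.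
Import Order.TTheory GRing.Theory Num.Theory.
Local Open Scope classical_set_scope.
Local Open Scope ring_scope.

Module Helpers.
Import numFieldNormedType.Exports.
Section S.
Local Open Scope classical_set_scope.
Context {R : realType}.
Notation D tau := (`[- tau, 0]%classic : set R).

Lemma bnd_integrable (tau : R) (h : R -> R) M :
  measurable_fun (D tau) h -> (forall t, D tau t -> `|h t| <= M) ->
  (@lebesgue_measure R).-integrable (D tau) (EFin \o h).
Proof.
move=> mh hM; apply: measurable_bounded_integrable => //.
- apply: compact_finite_measure; exact: segment_compact.
- exists M; split; rewrite ?num_real // => M' MM' t Dt /=.
  exact: le_trans (hM t Dt) (ltW MM').
Qed.

Lemma sumsq_cont n (s : seq 'I_n) :
  continuous (fun v : 'rV[R]_n => \sum_(i <- s) v 0 i ^+ 2).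
Proof.
elim: s => [|i s IH].
  by under eq_fun do rewrite big_nil; exact: cst_continuous.
under eq_fun do rewrite big_cons.
move=> v.
have := @continuousD R R^o _ (fun v : 'rV[R]_n => v 0 i ^+ 2)
   (fun v => \sum_(j <- s) v 0 j ^+ 2) v _ (IH v).
apply => //.
exact: (continuous_comp (@coord_continuous R 1 n 0 i v) (@exprn_continuous R 2 _)).
Qed.

Lemma enorm_continuous n : continuous (fun v : 'rV[R]_n => enorm v).
Proof.
move=> v; rewrite /enorm.
exact: (continuous_comp (@sumsq_cont n (index_enum 'I_n) v) (@sqrt_continuous R _)).
Qed.

Lemma N_facts n tau (phi : R -> 'rV[R]_n) : is_C tau phi ->
  measurable_fun (D tau) (fun t => enorm (phi t)) /\
  exists M, forall t, D tau t -> `|enorm (phi t)| <= M.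
Proof.
move=> cphi.
have cN : {within D tau, continuous (fun t => enorm (phi t))}.
  move=> x; exact: (continuous_comp (cphi x) (@enorm_continuous n _)).
split.
  apply: subspace_continuous_measurable_fun => //; exact: measurable_itv.
have /compact_bounded[M [_ mrt]] := continuous_compact cN (@segment_compact R (- tau) 0).
exists (M + 1) => t Dt; apply: (mrt (M + 1)); first by rewrite ltrDl.
by exists t.
Qed.

Notation Int tau g := ((@lebesgue_measure R).-integrable (D tau) (EFin \o g)).

Lemma intT_le tau g1 g2 : Int tau g1 -> Int tau g2 ->
  (forall t, D tau t -> g1 t <= g2 t) -> intT tau g1 <= intT tau g2.
Proof. by move=> i1 i2 h; apply: le_Rintegral => //; exact: measurable_itv. Qed.

Lemma intZ tau a g : Int tau g -> Int tau (fun t => a * g t).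
Proof.
move=> ig; apply: (eq_integrable _ (fun x => (a%:E * (EFin \o g) x)%E)).
- exact: measurable_itv.
- by move=> x _; rewrite /= EFinM.
- apply: integrableZl => //; exact: measurable_itv.
Qed.

Lemma intD tau g1 g2 : Int tau g1 -> Int tau g2 -> Int tau (fun t => g1 t + g2 t).
Proof.
move=> i1 i2; apply: (eq_integrable _ ((EFin \o g1) \+ (EFin \o g2))%E).
- exact: measurable_itv.
- by move=> x _; rewrite /= EFinD.
- apply: integrableD => //; exact: measurable_itv.
Qed.

Lemma intT_Z tau a g : Int tau g ->
  intT tau (fun t => a * g t) = a * intT tau g.
Proof. by move=> ig; rewrite /intT RintegralZl //; exact: measurable_itv. Qed.

Lemma intT_lin tau a b g1 g2 : Int tau g1 -> Int tau g2 ->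
  intT tau (fun t => a * g1 t + b * g2 t) = a * intT tau g1 + b * intT tau g2.
Proof.
move=> i1 i2; rewrite /intT RintegralD; [|exact: measurable_itv|exact: intZ|exact: intZ].
by rewrite !RintegralZl //; exact: measurable_itv.
Qed.

Lemma intT_cst (tau c : R) : 0 <= tau -> intT tau (fun _ => c) = c * tau.
Proof.
move=> t0; rewrite /intT Rintegral_cst; last exact: measurable_itv.
congr (_ * _).
have := lebesgue_measure_itv `[- tau, 0]%R.
move=> /= ->.
case: ifP => h; first by rewrite /= sub0r opprK.
have : tau = 0 by apply/eqP; move: h; rewrite lte_fin oppr_lt0 lt_neqAle t0 eq_sym andbT => /negbFE.
by move=> ->.
Qed.

Lemma intT_ge0 tau g : (forall t, D tau t -> 0 <= g t) -> 0 <= intT tau g.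
Proof. by move=> h; apply: Rintegral_ge0. Qed.

Lemma enorm_ge0 n (v : 'rV[R]_n) : 0 <= enorm v.
Proof. exact: sqrtr_ge0. Qed.

Lemma N_bnd n tau (phi : R -> 'rV[R]_n) : is_C tau phi ->
  measurable_fun (D tau) (fun t => enorm (phi t)) /\
  exists M, 0 <= M /\ forall t, D tau t -> enorm (phi t) <= M.
Proof.
move=> /N_facts [mN [M HM]]; split => //; exists (Num.max M 0); split.
  by rewrite le_max lexx orbT.
move=> t Dt; rewrite le_max; apply/orP; left.
by apply: le_trans (HM t Dt); rewrite ger0_norm ?enorm_ge0.
Qed.

Lemma int_pow n tau (phi : R -> 'rV[R]_n) k : is_C tau phi -> 0 <= k ->
  Int tau (fun t => enorm (phi t) `^ k).
Proof.
move=> /N_bnd [mN [M [M0 HM]]] k0.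
apply: (@bnd_integrable _ _ (M `^ k)).
  exact: (measurableT_comp (measurable_powR _) mN).
move=> t Dt; rewrite ger0_norm ?powR_ge0 //.
by apply: ge0_ler_powR => //; rewrite ?nnegrE ?enorm_ge0 ?HM.
Qed.

Lemma int_sq n tau (phi : R -> 'rV[R]_n) : is_C tau phi ->
  Int tau (fun t => enorm (phi t) ^+ 2).
Proof.
move=> /N_bnd [mN [M [M0 HM]]].
apply: (@bnd_integrable _ _ (M ^+ 2)); first exact: measurable_funX.
move=> t Dt; rewrite ger0_norm ?exprn_ge0 ?enorm_ge0 //.
by rewrite lerXn2r ?nnegrE ?enorm_ge0 ?HM.
Qed.

Lemma int_rho tau rho : in_W tau rho -> Int tau rho.
Proof.
move=> [mr [Mr HMr] r0 _].
apply: (@bnd_integrable _ _ Mr) => // t Dt.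
have Dt' : - tau <= t <= 0 by move: Dt; rewrite /= in_itv.
by rewrite ger0_norm ?r0 ?HMr.
Qed.

Lemma int_pow_rho n tau (phi : R -> 'rV[R]_n) rho k : is_C tau phi -> in_W tau rho ->
  0 <= k -> Int tau (fun t => enorm (phi t) `^ k * rho t).
Proof.
move=> /N_bnd [mN [M [M0 HM]]] [mr [Mr HMr] r0 _] k0.
apply: (@bnd_integrable _ _ (M `^ k * Mr)).
  apply: measurable_funM => //; exact: (measurableT_comp (measurable_powR _) mN).
move=> t Dt.
have Dt' : - tau <= t <= 0 by move: Dt; rewrite /= in_itv.
rewrite ger0_norm ?mulr_ge0 ?powR_ge0 ?r0 //.
apply: ler_pM; rewrite ?powR_ge0 ?r0 ?HMr //.
by apply: ge0_ler_powR => //; rewrite ?nnegrE ?enorm_ge0 ?HM.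
Qed.

Lemma int_cst tau (c : R) : Int tau (fun _ => c).
Proof.
apply: (@bnd_integrable _ _ `|c|) => //; exact: measurable_cst.
Qed.
End S.
Section Sc.
Context {R : realType}.

Lemma young1 (p r Q t : R) : 2 <= p -> 0 < r -> 0 < Q -> 0 <= t ->
  Q `^ ((p - 2) / 2) * t `^ (2 + r) <=
  (p - 2) / (p + r) * Q `^ ((p + r) / 2) + (2 + r) / (p + r) * t `^ (p + r).
Proof.
move=> p2 r0 Q0 t0.
have P0 : 0 < p + r by lra.
have [p2'|p2'] := eqVneq p 2.
  rewrite p2' subrr !mul0r powRr0 mul1r add0r divff ?mul1r //.
  by rewrite gt_eqF //; lra.
have pgt : 2 < p by rewrite lt_neqAle eq_sym p2' p2.
have hpp : 0 < (p + r) / (p - 2) by apply: divr_gt0 => //; lra.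
have hqq : 0 < (p + r) / (2 + r) by apply: divr_gt0 => //; lra.
have e1 : ((p + r) / (p - 2))^-1 + ((p + r) / (2 + r))^-1 = 1.
  rewrite !invf_div -mulrDl addrA subrK divff //; exact: lt0r_neq0.
have := @conjugate_powR R (Q `^ ((p - 2) / 2)) (t `^ (2 + r))
  ((p + r) / (p - 2)) ((p + r) / (2 + r)) (powR_ge0 _ _) (powR_ge0 _ _) hpp hqq e1.
rewrite -!powRrM.
have -> : (p - 2) / 2 * ((p + r) / (p - 2)) = (p + r) / 2.
  by field; rewrite subr_eq0.
have -> : (2 + r) * ((p + r) / (2 + r)) = p + r.
  by field; rewrite gt_eqF //; lra.
by rewrite !invf_div (mulrC ((p - 2) / (p + r))) (mulrC ((2 + r) / (p + r))).
Qed.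


Lemma young2 (P b t : R) : 2 < P -> 0 < b -> 0 <= t ->
  t ^+ 2 <= b `^ (2 / P) * (2 / P * (t `^ P / b) + (P - 2) / P).
Proof.
move=> P2 b0 t0.
have P0 : 0 < P by lra.
set c := b `^ (- (2 / P)).
have c0 : 0 <= c by exact: powR_ge0.
have hpp : 0 < P / 2 by apply: divr_gt0 => //; lra.
have hqq : 0 < P / (P - 2) by apply: divr_gt0 => //; lra.
have := @conjugate_powR R (t ^+ 2 * c) 1 (P / 2) (P / (P - 2))
  (mulr_ge0 (exprn_ge0 2 t0) c0) ler01 hpp hqq.
have e1 : (P / 2)^-1 + (P / (P - 2))^-1 = 1.
  by field; rewrite subr_eq0 (gt_eqF P2) (gt_eqF P0).
move=> /(_ e1).
rewrite powR1 mulr1 powRM ?exprn_ge0 //.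
rewrite -(@powR_mulrn _ t 2) // -!powRrM.
have -> : 2%:R * (P / 2) = P by field.
have -> : - (2 / P) * (P / 2) = -1 by field; rewrite gt_eqF.
rewrite powR_inv1 ?(ltW b0) // !invf_div => h.
have e : b `^ (2 / P) * c = 1.
  by rewrite /c -powRD ?subrr ?powRr0 // eqxx /= gt_eqF.
have -> : t `^ 2%:R = b `^ (2 / P) * (t `^ 2%:R * c).
  by rewrite mulrCA e mulr1.
apply: ler_wpM2l; first exact: powR_ge0.
by rewrite mul1r (mulrC (t `^ P / b)) in h.
Qed.

Lemma lemG (r s dl : R) : 0 <= r -> r < s -> 0 < dl ->
  exists C, 0 <= C /\ forall y, 1 <= y -> y `^ r <= dl * y `^ s + C.
Proof.
move=> r0 rs d0.
set Y0 := (dl^-1) `^ ((s - r)^-1).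
exists (Y0 `^ r); split; first exact: powR_ge0.
move=> y y1.
have y0 : 0 < y by lra.
have Y00 : 0 <= Y0 by exact: powR_ge0.
have [yY|Yy] := leP y Y0.
  have : y `^ r <= Y0 `^ r by apply: ge0_ler_powR; rewrite ?nnegrE; lra.
  have : 0 <= dl * y `^ s by rewrite mulr_ge0 ?powR_ge0 //; lra.
  lra.
have sr0 : 0 < s - r by lra.
have h1 : dl^-1 <= y `^ (s - r).
  have -> : dl^-1 = Y0 `^ (s - r).
    rewrite /Y0 -powRrM mulVf ?gt_eqF // powRr1 // invr_ge0; lra.
  by apply: ge0_ler_powR; rewrite ?nnegrE; lra.
have h2 : y `^ s = y `^ r * y `^ (s - r).
  by rewrite -powRD ?subrKC // (gt_eqF y0) /= implybT.
have h3 : 1 <= dl * y `^ (s - r).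
  by rewrite -(mulfV (lt0r_neq0 d0)) ler_pM2l.
have yr0 : 0 <= y `^ r by exact: powR_ge0.
rewrite h2 mulrCA.
have : y `^ r <= y `^ r * (dl * y `^ (s - r)) by rewrite ler_peMr.
have : 0 <= Y0 `^ r by exact: powR_ge0.
lra.
Qed.

Lemma lemS2 (q dl : R) : 0 < q -> 0 < dl ->
  exists C, 0 <= C /\ forall v, 0 <= v -> (1 + v) `^ q <= (1 + dl) * v `^ q + C.
Proof.
move=> q0 d0.
set k := (1 + dl) `^ q^-1.
have k1 : 1 < k.
  have h : (1:R) `^ q^-1 = 1 by rewrite powR1.
  rewrite /k -[X in X < _]h.
  by apply: gt0_ltr_powR; rewrite ?invr_gt0 ?nnegrE //; lra.
set V0 := (k - 1)^-1.
have V00 : 0 < V0 by rewrite invr_gt0; lra.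
exists ((1 + V0) `^ q); split; first exact: powR_ge0.
move=> v v0.
have [vV|Vv] := leP v V0.
  have : (1 + v) `^ q <= (1 + V0) `^ q.
    by apply: ge0_ler_powR; rewrite ?nnegrE; lra.
  have : 0 <= (1 + dl) * v `^ q by rewrite mulr_ge0 ?powR_ge0 //; lra.
  lra.
have h1 : 1 + v <= k * v.
  have : 1 <= (k - 1) * v.
    have : (k - 1) * V0 = 1 by rewrite mulfV // gt_eqF //; lra.
    have : (k - 1) * V0 <= (k - 1) * v by rewrite ler_pM2l; lra.
    lra.
  lra.
have h2 : (1 + v) `^ q <= (k * v) `^ q.
  by apply: ge0_ler_powR; rewrite ?nnegrE; nra.
rewrite powRM in h2; try lra.
rewrite /k -powRrM mulVf ?gt_eqF // powRr1 in h2; try lra.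
have : 0 <= (1 + V0) `^ q by exact: powR_ge0.
lra.
Qed.
End Sc.
End Helpers.
Import Helpers.


Section F.
Context {R : realType}.

Lemma F_pow (Q p : R) : 0 < Q -> Q `^ ((p - 2) / 2) * Q = Q `^ (p / 2).
Proof.
move=> Q0.
have -> : p / 2 = (p - 2) / 2 + 1 by field.
by rewrite powRD ?powRr1 ?(ltW Q0) // (gt_eqF Q0) implybT.
Qed.

Lemma F_d (eps tau y I K Q : R) : 0 < eps -> eps < 1 -> 0 < tau -> 0 <= y -> 0 <= I ->
  K = (eps * (1 - eps))^-1 -> Q = 1 + (1 - eps) * y + eps / tau * I ->
  1 + y + tau^-1 * I <= K * Q.
Proof.
move=> e0 e1 t0 y0 I0 -> ->.
have z0 : 0 <= tau^-1 * I by rewrite mulr_ge0 // invr_ge0 ltW.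
have ee : 0 < eps * (1 - eps) by rewrite mulr_gt0 //; lra.
have -> : 1 + y + tau^-1 * I = (eps * (1 - eps))^-1 * (eps * (1 - eps) * (1 + y + tau^-1 * I)).
  by rewrite mulrA mulVf ?mul1r // lt0r_neq0.
apply: ler_wpM2l; first by rewrite invr_ge0 ltW.
have -> : eps / tau * I = eps * (tau^-1 * I) by ring.
move: z0; set z := tau^-1 * I => z0.
have t1 : 0 <= (1 - eps) * y by rewrite mulr_ge0 //; lra.
have t2 : 0 <= eps * z by rewrite mulr_ge0 //; lra.
nra.
Qed.

Lemma F_e (eps p r x Q : R) : 2 <= p -> 0 < r -> 0 < eps -> eps < 1 -> 0 <= x ->
  (1 - eps) * x ^+ 2 <= Q ->
  (1 - eps) `^ ((p - 2) / 2) * x `^ (p + r) <= Q `^ ((p - 2) / 2) * x `^ (2 + r).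
Proof.
move=> p2 r0 e0 e1 x0 hQ.
have m0 : 0 <= (p - 2) / 2 by apply: divr_ge0; lra.
have ne : 0 <= 1 - eps by lra.
have x20 : 0 <= x ^+ 2 by exact: exprn_ge0.
have h : ((1 - eps) * x ^+ 2) `^ ((p - 2) / 2) <= Q `^ ((p - 2) / 2).
  apply: ge0_ler_powR => //; rewrite nnegrE ?mulr_ge0 //.
  exact: le_trans (mulr_ge0 ne x20) hQ.
rewrite powRM // -(@powR_mulrn _ x 2) // -powRrM in h.
move: h; have -> : 2%:R * ((p - 2) / 2) = p - 2 by field.
move=> h.
have -> : x `^ (p + r) = x `^ (p - 2) * x `^ (2 + r).
  rewrite -powRD; first by congr (_ `^ _); ring.
  by rewrite addrA subrK (gt_eqF (_ : 0 < p + r)) //; lra.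
by rewrite mulrA; apply: ler_wpM2r => //; exact: powR_ge0.
Qed.

Lemma F_w (eps p a2 : R) : 0 < 1 - eps ->
  (1 - eps) * p / 2 * a2 * (1 - eps) `^ ((p - 2) / 2) = p / 2 * a2 * (1 - eps) `^ (p / 2).
Proof. by move=> h; rewrite -(@F_pow (1 - eps) p h); ring. Qed.

Lemma Kc (Z Dd G : R) : 0 < Z -> 0 <= Dd -> Dd < G ->
  exists dl dp, [/\ 0 < dl, 0 < dp & (Z * dl + Dd) * (1 + dp) <= G].
Proof.
move=> Z0 Dd0 GD.
have G0 : 0 < G by lra.
pose dp := (G - Dd) / (2 * G).
pose dl := (G - Dd) / (4 * (Z + 1)).
have dp0 : 0 < dp by rewrite /dp divr_gt0 ?mulr_gt0 //; lra.
have dl0 : 0 < dl by rewrite /dl divr_gt0 ?mulr_gt0 //; lra.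
exists dl, dp; split => //.
have Z1 : 0 < Z + 1 by lra.
have f1 : Z * dl <= (G - Dd) / 4.
  have -> : Z * dl = (G - Dd) / 4 * (Z / (Z + 1)) by rewrite /dl; field; lra.
  have : Z / (Z + 1) <= 1 by rewrite ler_pdivrMr // mul1r; lra.
  move=> h; rewrite -[X in _ <= X]mulr1; apply: ler_wpM2l => //.
  apply: divr_ge0; lra.
have f2 : dp <= 1 / 2.
  by rewrite /dp ler_pdivrMr ?mulr_gt0 //; lra.
have f3 : Dd * dp <= (G - Dd) / 2.
  have -> : Dd * dp = (G - Dd) / 2 * (Dd / G) by rewrite /dp; field; lra.
  have : Dd / G <= 1 by rewrite ler_pdivrMr // mul1r; lra.
  move=> h; rewrite -[X in _ <= X]mulr1; apply: ler_wpM2l => //.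
  apply: divr_ge0; lra.
have f4 : (Z * dl) * dp <= (Z * dl) * (1 / 2).
  by apply: ler_wpM2l => //; rewrite mulr_ge0 //; lra.
have : 0 <= Z * dl by rewrite mulr_ge0 //; lra.
clearbody dl dp.
lra.
Qed.


Lemma F_f n tau (phi : R -> 'rV[R]_n) rho (p r Q : R) :
  is_C tau phi -> in_W tau rho -> 2 <= p -> 0 < r -> 0 < Q ->
  Q `^ ((p - 2) / 2) * intT tau (fun t => enorm (phi t) `^ (2 + r) * rho t) <=
  (p - 2) / (p + r) * Q `^ ((p + r) / 2) +
  (2 + r) / (p + r) * intT tau (fun t => enorm (phi t) `^ (p + r) * rho t).
Proof.
move=> Cphi hW p2 r0 Q0.
have i1 := int_pow_rho _ _ _ _ (2 + r) Cphi hW ltac:(lra).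
have i2 := int_pow_rho _ _ _ _ (p + r) Cphi hW ltac:(lra).
have ir := int_rho _ _ hW.
have eW : intT tau rho = 1 by case: hW.
have rD : forall t, (`[- tau, 0]%classic : set R) t -> 0 <= rho t.
  move=> t Dt; case: hW => _ _ h _; apply: h; move: Dt; by rewrite /= in_itv.
rewrite -intT_Z //.
have -> : (p - 2) / (p + r) * Q `^ ((p + r) / 2) +
  (2 + r) / (p + r) * intT tau (fun t => enorm (phi t) `^ (p + r) * rho t) =
  (p - 2) / (p + r) * Q `^ ((p + r) / 2) * intT tau rho +
  (2 + r) / (p + r) * intT tau (fun t => enorm (phi t) `^ (p + r) * rho t).
  by rewrite eW mulr1.
rewrite -intT_lin //.
apply: intT_le; [exact: intZ | by apply: intD; exact: intZ |].
move=> t Dt.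
have hy := young1 p r Q (enorm (phi t)) p2 r0 Q0 (enorm_ge0 _ _).
rewrite mulrA [(2 + r) / (p + r) * (_ * _)]mulrA -mulrDl.
by apply: ler_wpM2r => //; exact: rD.
Qed.

Lemma F_g n tau (phi : R -> 'rV[R]_n) (p r eps : R) :
  0 < tau -> is_C tau phi -> 2 <= p -> 0 < r -> 0 < eps -> eps < 1 ->
  ((1 - eps) * enorm (phi 0) ^+ 2 + eps / tau * intT tau (fun t => enorm (phi t) ^+ 2))
     `^ ((p + r) / 2)
  <= (1 - eps) * enorm (phi 0) `^ (p + r)
     + eps / tau * intT tau (fun t => enorm (phi t) `^ (p + r)) + 1.
Proof.
move=> t0 Cphi p2 r0 e0 e1.
have iP := int_pow _ _ _ (p + r) Cphi ltac:(lra).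
have i2 := int_sq _ _ _ Cphi.
have i1 := int_cst tau 1.
set x := enorm (phi 0).
set I2 := intT tau (fun t => enorm (phi t) ^+ 2).
set Ib := intT tau (fun t => enorm (phi t) `^ (p + r)).
have x0 : 0 <= x by exact: enorm_ge0.
have Ib0 : 0 <= Ib by apply: intT_ge0 => t _; exact: powR_ge0.
have I20 : 0 <= I2 by apply: intT_ge0 => t _; exact: exprn_ge0 (enorm_ge0 _ _).
have xP0 : 0 <= x `^ (p + r) by exact: powR_ge0.
have te : 0 < eps / tau by rewrite divr_gt0.
set M := (1 - eps) * x `^ (p + r) + eps / tau * Ib.
have M0 : 0 <= M.
  rewrite /M; apply: addr_ge0; apply: mulr_ge0 => //; lra.
set b := M + 1.
have b0 : 0 < b by rewrite /b; lra.
have P2 : 2 < p + r by lra.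
set be := b `^ (2 / (p + r)).
have be0 : 0 <= be by exact: powR_ge0.
pose al := be * (2 / (p + r)) / b.
pose bt := be * ((p + r - 2) / (p + r)).
have yy : forall y, 0 <= y -> y ^+ 2 <= al * y `^ (p + r) + bt.
  move=> y y0; have := young2 (p + r) b y P2 b0 y0.
  have -> : be * (2 / (p + r) * (y `^ (p + r) / b) + (p + r - 2) / (p + r))
     = al * y `^ (p + r) + bt by rewrite /al /bt; ring.
  by [].
have hx := yy x x0.
have hI : I2 <= al * Ib + bt * tau.
  rewrite -[X in _ <= _ + _ * X]mul1r -(intT_cst tau 1 (ltW t0)) -intT_lin //.
  apply: intT_le => //; first by apply: intD; exact: intZ.
  by move=> t _; rewrite mulr1; apply: yy; exact: enorm_ge0.
have hu : (1 - eps) * x ^+ 2 + eps / tau * I2 <= al * M + bt.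
  have h1 : (1 - eps) * x ^+ 2 <= (1 - eps) * (al * x `^ (p + r) + bt).
    by apply: ler_wpM2l => //; lra.
  have h2 : eps / tau * I2 <= eps / tau * (al * Ib + bt * tau).
    by apply: ler_wpM2l => //; exact: ltW.
  have e3 : eps / tau * (al * Ib + bt * tau) = al * (eps / tau * Ib) + eps * bt.
    by field; exact: lt0r_neq0.
  rewrite e3 in h2.
  have -> : al * M + bt = (1 - eps) * (al * x `^ (p + r) + bt) + (al * (eps / tau * Ib) + eps * bt).
    by rewrite /M; ring.
  exact: lerD.
have hb : al * M + bt <= be.
  have hMb : M / b <= 1 by rewrite ler_pdivrMr // mul1r /b; lra.
  have -> : al * M + bt = be * (2 / (p + r) * (M / b) + (p + r - 2) / (p + r)).
    by rewrite /al /bt; ring.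
  have : be * (2 / (p + r) * (M / b) + (p + r - 2) / (p + r))
      <= be * (2 / (p + r) * 1 + (p + r - 2) / (p + r)).
    apply: ler_wpM2l => //; apply: lerD => //; apply: ler_wpM2l => //.
    by apply: divr_ge0; lra.
  have -> : 2 / (p + r) * 1 + (p + r - 2) / (p + r) = 1.
    by field; apply: lt0r_neq0; lra.
  by rewrite mulr1.
have u0 : 0 <= (1 - eps) * x ^+ 2 + eps / tau * I2.
  apply: addr_ge0; apply: mulr_ge0 => //; rewrite ?exprn_ge0 //; lra.
have : ((1 - eps) * x ^+ 2 + eps / tau * I2) `^ ((p + r) / 2) <= be `^ ((p + r) / 2).
  apply: ge0_ler_powR; rewrite ?nnegrE //; first by apply: divr_ge0; lra.
  exact: le_trans hu hb.
rewrite /be -powRrM.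
have -> : 2 / (p + r) * ((p + r) / 2) = 1 by field; apply: lt0r_neq0; lra.
by rewrite powRr1 ?(ltW b0).
Qed.

Lemma core (c E a1 a2 a3 K Z Dd G dl dp C1 C2 Qp Qm Qq H T1 x2r J xP wm Jr M
    Pm Pr al1 al2I al3 p w : R) :
  0 <= E -> 0 < a1 -> 0 < a2 -> 0 < a3 -> 0 <= Qm -> 0 <= Z -> 0 <= Dd ->
  0 <= dl -> 0 <= M -> 0 <= Jr ->
  H <= a1 * T1 - a2 * x2r + a3 * J ->
  Qm * T1 <= K * Qp ->
  wm * xP <= Qm * x2r ->
  Qm * J <= Pm * Qq + Pr * Jr ->
  Qp <= dl * Qq + C1 ->
  Qq <= (1 + dp) * (M + 1) + C2 ->
  (Z * dl + Dd) * (1 + dp) <= G ->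
  Z = c + E * a1 * K ->
  Dd = E * a3 * Pm ->
  E * a2 * wm = p / 2 * a2 * w ->
  E * a3 * Pr <= al3 ->
  - al1 * xP + al2I = - (p / 2 * a2 * w) * xP + G * M ->
  c * Qp + E * Qm * H <= Z * C1 + G + (Z * dl + Dd) * C2 + 1 - al1 * xP + al2I + al3 * Jr.
Proof.
move=> E0 a10 a20 a30 Qm0 Z0 Dd0 dl0 M0 Jr0 hH hd he hf hi hh key eZ eDd ew eX ea.
have s1 : E * Qm * H <= E * Qm * (a1 * T1 - a2 * x2r + a3 * J).
  by apply: ler_wpM2l => //; exact: mulr_ge0.
have s2 : E * a1 * (Qm * T1) <= E * a1 * (K * Qp).
  by apply: ler_wpM2l => //; rewrite mulr_ge0 // ltW.
have s3 : E * a2 * (wm * xP) <= E * a2 * (Qm * x2r).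
  by apply: ler_wpM2l => //; rewrite mulr_ge0 // ltW.
have s4 : E * a3 * (Qm * J) <= E * a3 * (Pm * Qq + Pr * Jr).
  by apply: ler_wpM2l => //; rewrite mulr_ge0 // ltW.
have s5 : Z * Qp <= Z * (dl * Qq + C1) by apply: ler_wpM2l.
have ZD0 : 0 <= Z * dl + Dd by rewrite addr_ge0 // mulr_ge0.
have s6 : (Z * dl + Dd) * Qq <= (Z * dl + Dd) * ((1 + dp) * (M + 1) + C2).
  by apply: ler_wpM2l.
have s7 : (Z * dl + Dd) * (1 + dp) * (M + 1) <= G * (M + 1).
  by apply: ler_wpM2r => //; rewrite addr_ge0.
have s8 : E * a3 * Pr * Jr <= al3 * Jr by apply: ler_wpM2r.
have ew' : E * a2 * wm * xP = p / 2 * a2 * w * xP by rewrite ew.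
subst Z Dd.
lra.
Qed.
End F.

Theorem lemma3p2 (R : realType) (n d : nat) (tau : R)
  (f : (R -> 'rV[R]_n) -> 'rV[R]_n) (g : (R -> 'rV[R]_n) -> 'M[R]_(n, d))
  (p varrho a1 a2 a3 : R) (rho1 : R -> R) (eps0 kappa : R) :
  0 < tau ->
  2 <= p -> 0 < varrho -> 0 < a1 -> 0 < a2 -> 0 < a3 -> a3 < a2 ->
  in_W tau rho1 ->
  (forall phi : R -> 'rV[R]_n, is_C tau phi ->
     2 * edot (phi 0) (f phi) + (p - 1) * fnorm (g phi) ^+ 2
     <= a1 * (1 + enorm (phi 0) ^+ 2 + tau^-1 * intT tau (fun t => enorm (phi t) ^+ 2))
        - a2 * (enorm (phi 0) `^ (2 + varrho))
        + a3 * intT tau (fun t => enorm (phi t) `^ (2 + varrho) * rho1 t)) ->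
  0 < eps0 < 1 ->
  (a2 + a3) / 2 < a2 * (1 - eps0) `^ (p / 2) ->
  0 < kappa < 1 ->
  (a2 + a3) * (1 + kappa) / 2 < a2 * (1 - eps0) `^ (p / 2) ->
  let Phi := fun phi : R -> 'rV[R]_n =>
    1 + (1 - eps0) * enorm (phi 0) ^+ 2
      + eps0 / tau * intT tau (fun t => enorm (phi t) ^+ 2) in
  let alpha1 := p / 2 * (a2 * (1 - eps0) `^ (p / 2)
      - (1 + kappa) * (1 - eps0) * (a3 * (p - 2) / (p + varrho) + (a2 - a3) / 2)) in
  let alpha2 := p * (1 + kappa) * eps0 / 2 *
      (a3 * (p - 2) / (p + varrho) + (a2 - a3) / 2) in
  let alpha3 := a3 * p * (2 + varrho) / (2 * (p + varrho)) in
  (0 < alpha2 + alpha3 /\ alpha2 + alpha3 < alpha1) /\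
  forall c : R, 0 < c -> exists L : R, 0 < L /\
    forall phi : R -> 'rV[R]_n, is_C tau phi ->
      c * Phi phi `^ (p / 2)
      + (1 - eps0) * p / 2 * Phi phi `^ ((p - 2) / 2)
          * (2 * edot (phi 0) (f phi) + (p - 1) * fnorm (g phi) ^+ 2)
      <= L - alpha1 * enorm (phi 0) `^ (p + varrho)
         + alpha2 / tau * intT tau (fun t => enorm (phi t) `^ (p + varrho))
         + alpha3 * intT tau (fun t => enorm (phi t) `^ (p + varrho) * rho1 t).
Proof.
move=> tau0 p2 r0 a10 a20 a30 a32 hW hyp /andP[e0 e1] h1 /andP[k0 k1] h2.
move=> Phi alpha1 alpha2 alpha3.
have P0 : 0 < p + varrho by lra.
have P0' : p + varrho != 0 by rewrite gt_eqF.
set w := (1 - eps0) `^ (p / 2).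
set A := a3 * (p - 2) / (p + varrho).
set X := a3 * (2 + varrho) / (p + varrho).
set S := A + (a2 - a3) / 2.
have A0 : 0 <= A by rewrite /A divr_ge0 ?mulr_ge0 //; lra.
have S0 : 0 < S by rewrite /S; lra.
have X0 : 0 < X by rewrite /X divr_gt0 ?mulr_gt0 //; lra.
have eS : S + X = (a2 + a3) / 2 by rewrite /S /A /X; field.
have ea1 : alpha1 = p / 2 * (a2 * w - (1 + kappa) * (1 - eps0) * S) by [].
have ea2 : alpha2 = p * (1 + kappa) * eps0 / 2 * S by [].
have ea3 : alpha3 = p / 2 * X by rewrite /alpha3 /X; field.
have al2 : 0 < alpha2 by rewrite ea2 !mulr_gt0 ?invr_gt0 //; lra.
have al3 : 0 < alpha3 by rewrite ea3 !mulr_gt0 ?invr_gt0 //; lra.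
split.
  split; first lra.
  have eq : alpha1 - alpha2 - alpha3 = p / 2 * (a2 * w - (1 + kappa) * S - X).
    by rewrite ea1 ea2 ea3; field.
  have kX : 0 < kappa * X by rewrite mulr_gt0.
  have ekS : kappa * (S + X) = kappa * ((a2 + a3) / 2) by rewrite eS.
  have : 0 < a2 * w - (1 + kappa) * S - X.
    move: h2; rewrite -/w => h2; lra.
  move=> gpos.
  have : 0 < p / 2 * (a2 * w - (1 + kappa) * S - X) by rewrite mulr_gt0 //; lra.
  lra.
move=> c c0.
have ne0 : 0 < 1 - eps0 by lra.
have p0 : 0 < p by lra.
pose E := (1 - eps0) * p / 2.
have E0 : 0 <= E by rewrite /E; apply: divr_ge0; [apply: mulr_ge0|]; lra.
have Ep : E <= p / 2.
  have : 0 <= eps0 * p by rewrite mulr_ge0 //; lra.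
  rewrite /E; lra.
pose K := (eps0 * (1 - eps0))^-1.
have K0 : 0 < K by rewrite /K invr_gt0 mulr_gt0.
pose Z := c + E * a1 * K.
have Z0 : 0 < Z.
  have : 0 <= E * a1 * K by rewrite !mulr_ge0 //; lra.
  rewrite /Z; lra.
pose Dd := E * A.
have Dd0 : 0 <= Dd by rewrite /Dd mulr_ge0.
pose G := p / 2 * (1 + kappa) * S.
have GD : Dd < G.
  have kS : 0 < kappa * S by rewrite mulr_gt0.
  have eA : 0 <= eps0 * A by rewrite mulr_ge0 //; lra.
  have eS' : S = A + (a2 - a3) / 2 by [].
  have : 0 < (1 + kappa) * S - (1 - eps0) * A by lra.
  move=> h; have h' : 0 < p / 2 * ((1 + kappa) * S - (1 - eps0) * A).
    by rewrite mulr_gt0 //; lra.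
  suff : 0 < G - Dd by lra.
  have -> : G - Dd = p / 2 * ((1 + kappa) * S - (1 - eps0) * A) by rewrite /G /Dd /E; ring.
  exact: h'.
have [dl [dp [dl0 dp0 key]]] := Kc _ _ _ Z0 Dd0 GD.
have [C1 [C10 HC1]] := @lemG R (p / 2) ((p + varrho) / 2) dl
   (ltW (divr_gt0 p0 (ltr0Sn _ 1))) ltac:(lra) dl0.
have [C2 [C20 HC2]] := @lemS2 R ((p + varrho) / 2) dp ltac:(lra) dp0.
have G0 : 0 < G by lra.
exists (Z * C1 + G + (Z * dl + Dd) * C2 + 1).
split.
  have : 0 <= Z * C1 by rewrite mulr_ge0 //; lra.
  have : 0 <= (Z * dl + Dd) * C2 by rewrite mulr_ge0 // addr_ge0 // mulr_ge0 //; lra.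
  lra.
move=> phi Cphi.
have hH := hyp phi Cphi.
have x0 := enorm_ge0 _ (phi 0).
have x20 : 0 <= enorm (phi 0) ^+ 2 by exact: exprn_ge0.
have I20 : 0 <= intT tau (fun t => enorm (phi t) ^+ 2).
  by apply: intT_ge0 => t _; exact: exprn_ge0 (enorm_ge0 _ _).
have Ib0 : 0 <= intT tau (fun t => enorm (phi t) `^ (p + varrho)).
  by apply: intT_ge0 => t _; exact: powR_ge0.
have Jr0 : 0 <= intT tau (fun t => enorm (phi t) `^ (p + varrho) * rho1 t).
  apply: intT_ge0 => t Dt; apply: mulr_ge0; first exact: powR_ge0.
  case: hW => _ _ h _; apply: h; move: Dt; by rewrite /= in_itv.
set Q := Phi phi.
have eQ : Q = 1 + (1 - eps0) * enorm (phi 0) ^+ 2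
    + eps0 / tau * intT tau (fun t => enorm (phi t) ^+ 2) by [].
have t1 : 0 <= (1 - eps0) * enorm (phi 0) ^+ 2 by rewrite mulr_ge0 //; lra.
have t2 : 0 <= eps0 / tau * intT tau (fun t => enorm (phi t) ^+ 2).
  by rewrite mulr_ge0 // divr_ge0 //; lra.
have Q1 : 1 <= Q by rewrite eQ; lra.
have Q0 : 0 < Q by lra.
have Qm0 : 0 <= Q `^ ((p - 2) / 2) by exact: powR_ge0.
have hd : Q `^ ((p - 2) / 2) *
    (1 + enorm (phi 0) ^+ 2 + tau^-1 * intT tau (fun t => enorm (phi t) ^+ 2))
    <= K * Q `^ (p / 2).
  have := @F_d R _ _ _ _ _ _ e0 e1 tau0 x20 I20 erefl eQ.
  move=> /(ler_wpM2l Qm0); rewrite mulrCA F_pow //.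
have he := @F_e R eps0 p varrho _ Q p2 r0 e0 e1 x0 ltac:(rewrite eQ; lra).
have hf := F_f _ _ _ _ p varrho Q Cphi hW p2 r0 Q0.
have hi := HC1 Q Q1.
have hg := F_g _ _ _ p varrho eps0 tau0 Cphi p2 r0 e0 e1.
have u0 := addr_ge0 t1 t2.
have hh : Q `^ ((p + varrho) / 2) <= (1 + dp) * ((1 - eps0) * enorm (phi 0) `^ (p + varrho)
     + eps0 / tau * intT tau (fun t => enorm (phi t) `^ (p + varrho)) + 1) + C2.
  have := HC2 _ u0; rewrite addrA -eQ => h.
  apply: le_trans h _; rewrite lerD2r; apply: ler_wpM2l => //; lra.
have M0 : 0 <= (1 - eps0) * enorm (phi 0) `^ (p + varrho)
     + eps0 / tau * intT tau (fun t => enorm (phi t) `^ (p + varrho)).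
  by apply: addr_ge0; rewrite mulr_ge0 ?powR_ge0 ?divr_ge0 //; lra.
have eDd : Dd = E * a3 * ((p - 2) / (p + varrho)) by rewrite /Dd /A; ring.
have ew := @F_w R eps0 p a2 ne0.
have eX : E * a3 * ((2 + varrho) / (p + varrho)) <= alpha3.
  rewrite ea3 /X; have -> : p / 2 * (a3 * (2 + varrho) / (p + varrho)) =
    p / 2 * (a3 * ((2 + varrho) / (p + varrho))) by ring.
  rewrite -mulrA; apply: ler_wpM2r => //; rewrite mulr_ge0 ?divr_ge0 //; lra.
have ea : - alpha1 * enorm (phi 0) `^ (p + varrho) +
    alpha2 / tau * intT tau (fun t => enorm (phi t) `^ (p + varrho)) =
    - (p / 2 * a2 * w) * enorm (phi 0) `^ (p + varrho) +
    G * ((1 - eps0) * enorm (phi 0) `^ (p + varrho)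
     + eps0 / tau * intT tau (fun t => enorm (phi t) `^ (p + varrho))).
  by rewrite ea1 ea2 /G; ring.
have := @core R c E a1 a2 a3 K Z Dd G dl dp C1 C2 _ _ _ _ _ _ _ _ _ _ _ _ _ _ _ _ _ _
  E0 a10 a20 a30 Qm0 (ltW Z0) Dd0 (ltW dl0) M0 Jr0 hH hd he hf hi hh key
  erefl eDd ew eX ea.
by [].
Qed.
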